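(* Let $\mathcal U=(\mathcal U^{ij}_{\alpha\beta})$ be a four-index complex array, and let $(X_1,Y_1,X_2,Y_2)$ and $(\widetilde X_1,\widetilde Y_1,\widetilde X_2,\widetilde Y_2)$ be two admissible decompositions of $\mathcal U$ (with the same $d_l,d_r$) in which $X_1,X_2,\widetilde X_1,\widetilde X_2$ are left-invertible and $Y_1,Y_2,\widetilde Y_1,\widetilde Y_2$ are right-invertible. Then there exist nonzero scalars $\delta_1,\delta_2\in\mathbb{C}$ with $\delta_1\delta_2=1$ and unitary matrices $W_1\in U(d_r)$, $W_2\in U(d_l)$ such that, as matrices, $$\widetilde X_i=\delta_i\,X_iW_i,\qquad \widetilde Y_i=\frac{1}{\delta_i}\,W_i^\dagger Y_i,\qquad i=1,2.$$
   Context: Fix positive integers $d$ (physical dimension), $D$ (bond dimension), $d_l,d_r$. Let $\mathcal U=(\mathcal U^{ij}_{\alpha\beta})$ with $i,j\in\{1,\dots,d\}$, $\alpha,\beta\in\{1,\dots,D\}$. An admissible decomposition of $\mathcal U$ is a quadruple of complex arrays $X_1=((X_1)^i_{\beta,b})$, $Y_1=((Y_1)^j_{b,\alpha})$ with $b\in\{1,\dots,d_r\}$, and $X_2=((X_2)^i_{\alpha,a})$, $Y_2=((Y_2)^j_{a,\beta})$ with $a\in\{1,\dots,d_l\}$, such that (a) $\mathcal U^{ij}_{\alpha\beta}=\sum_{b}(X_1)^i_{\beta,b}(Y_1)^j_{b,\alpha}=\sum_a (X_2)^i_{\alpha,a}(Y_2)^j_{a,\beta}$ for all $i,j,\alpha,\beta$;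 (b) the matrices $u$ with rows indexed by $(a,b)$ and columns by $(j,j')$, $u_{(a,b),(j,j')}=\sum_{\gamma}(Y_2)^j_{a,\gamma}(Y_1)^{j'}_{b,\gamma}$, and $v$ with rows indexed by $(i,i')$ and columns by $(b,a)$, $v_{(i,i'),(b,a)}=\sum_\gamma (X_1)^i_{\gamma,b}(X_2)^{i'}_{\gamma,a}$, are both unitary (in particular $d_ld_r=d^2$). Matrix conventions: $X_1$ is regarded as the $(dD)\times d_r$ matrix with rows $(i,\beta)$ and columns $b$; $Y_1$ as the $d_r\times(Dd)$ matrix with rows $b$ and columns $(\alpha,j)$; $X_2$ as the $(dD)\times d_l$ matrix with rows $(i,\alpha)$ and columns $a$; $Y_2$ as the $d_l\times(dD)$ matrix with rows $a$ and columns $(j,\beta)$. Left-invertible means having a left inverse (full column rank); right-invertible means having a right inverse (full row rank). Products $X_iW_i$ and $W_i^\dagger Y_i$ are ordinary matrix products in these conventions. *)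

(* Defs.v *)
(* Complex numbers are modelled as complex R (= R[i]) for an
   arbitrary R : realType, i.e. (a model of) the field C. *)
From HB Require Import structures.
From mathcomp Require Import all_boot all_order all_algebra.
From mathcomp Require Import complex.
From mathcomp Require Import reals.
Set Implicit Arguments. Unset Strict Implicit. Unset Printing Implicit Defensive.
Import Order.TTheory GRing.Theory Num.Theory.
Local Open Scope ring_scope.

Definition ctrmx (C : numClosedFieldType) m n (A : 'M[C]_(m, n)) : 'M[C]_(n, m) :=
  (map_mx Num.conj A)^T.

(* (possibly rectangular) unitary matrix: A A^dagger = 1 and A^dagger A = 1
   (for finite matrices this forces m = n). *)
Definition unitary_mx (C : numClosedFieldType) m n (A : 'M[C]_(m, n)) : Prop :=
  A *m ctrmx A = 1%:M /\ ctrmx A *m A = 1%:M.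

Definition left_invertible (C : numClosedFieldType) m n (A : 'M[C]_(m, n)) : Prop :=
  exists L : 'M[C]_(n, m), L *m A = 1%:M.

Definition right_invertible (C : numClosedFieldType) m n (A : 'M[C]_(m, n)) : Prop :=
  exists R : 'M[C]_(n, m), A *m R = 1%:M.

(* Index pairing: the pair (x, y) with x : 'I_p, y : 'I_q is the row/column
   index mxvec_index x y : 'I_(p * q).
   X1 : rows (i,beta), cols b      : 'M_(d*D, dr)
   Y1 : rows b, cols (alpha,j)     : 'M_(dr, D*d)
   X2 : rows (i,alpha), cols a     : 'M_(d*D, dl)
   Y2 : rows a, cols (j,beta)      : 'M_(dl, d*D) *)

(* The matrices u and
   v of (b) are specified entrywise; since mxvec_index is a bijection
   'I_p * 'I_q -> 'I_(p*q), the entry equations determine u and v uniquely, so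
   "the matrix u with these entries is unitary" is rendered as "there is a
   matrix with these entries and it is unitary". *)
Definition admissible (C : numClosedFieldType) (d D dl dr : nat)
  (U : 'I_d -> 'I_d -> 'I_D -> 'I_D -> C)
  (X1 : 'M[C]_(d * D, dr)) (Y1 : 'M[C]_(dr, D * d))
  (X2 : 'M[C]_(d * D, dl)) (Y2 : 'M[C]_(dl, d * D)) : Prop :=
  (forall (i j : 'I_d) (al be : 'I_D),
      U i j al be = \sum_(b < dr) X1 (mxvec_index i be) b * Y1 b (mxvec_index al j)
   /\ U i j al be = \sum_(a < dl) X2 (mxvec_index i al) a * Y2 a (mxvec_index j be))
  /\ (exists u : 'M[C]_(dl * dr, d * d),
        (forall (a : 'I_dl) (b : 'I_dr) (j j' : 'I_d),
           u (mxvec_index a b) (mxvec_index j j')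
           = \sum_(g < D) Y2 a (mxvec_index j g) * Y1 b (mxvec_index g j'))
        /\ unitary_mx u)
  /\ (exists v : 'M[C]_(d * d, dr * dl),
        (forall (i i' : 'I_d) (b : 'I_dr) (a : 'I_dl),
           v (mxvec_index i i') (mxvec_index b a)
           = \sum_(g < D) X1 (mxvec_index i g) b * X2 (mxvec_index i' g) a)
        /\ unitary_mx v).

(* Main.v *)
Require Import Defs.
From HB Require Import structures.
From mathcomp Require Import all_boot all_order all_algebra.
From mathcomp Require Import complex.
From mathcomp Require Import reals.
From mathcomp Require Import ring.
Import Order.TTheory GRing.Theory Num.Theory.
Local Open Scope ring_scope.

Section Aux.
Variable C : numClosedFieldType.
Local Set Implicit Arguments.
Local Unset Strict Implicit.

Definition upr m n (k : 'I_(m * n)) : 'I_m * 'I_n :=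
  enum_val (cast_ord (esym (mxvec_cast m n)) k).

Lemma uprK m n (i : 'I_m) (j : 'I_n) : upr (mxvec_index i j) = (i, j).
Proof. by rewrite /upr /mxvec_index cast_ordK enum_rankK. Qed.

Lemma big_mxvec m n (F : 'I_(m * n) -> C) :
  \sum_(k < m * n) F k = \sum_(i < m) \sum_(j < n) F (mxvec_index i j).
Proof.
rewrite pair_big /=.
rewrite (reindex (fun p : 'I_m * 'I_n => mxvec_index p.1 p.2)) //=.
exists (@upr m n) => [[i j] _|k _]; first by rewrite uprK.
by case: (mxvec_indexP k) => i j; rewrite uprK.
Qed.

Lemma mxvec_eq m n (a c : 'I_m) (b e : 'I_n) :
  (mxvec_index a b == mxvec_index c e) = (a == c) && (b == e).
Proof.
apply/idP/idP.
  by move/eqP/(congr1 (@upr m n)); rewrite !uprK => -[-> ->]; rewrite !eqxx.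
by case/andP => /eqP-> /eqP->.
Qed.

Definition kron m n (A : 'M[C]_m) (B : 'M[C]_n) : 'M[C]_(m * n) :=
  \matrix_(r, c) (A (upr r).1 (upr c).1 * B (upr r).2 (upr c).2).

Lemma kronE m n (A : 'M[C]_m) (B : 'M[C]_n) a b c e :
  kron A B (mxvec_index a b) (mxvec_index c e) = A a c * B b e.
Proof. by rewrite mxE !uprK. Qed.

Lemma ctrE m n (A : 'M[C]_(m, n)) i j : ctrmx A i j = (A j i)^*.
Proof. by rewrite /ctrmx !mxE. Qed.

Lemma ctrmx_mul m n p (A : 'M[C]_(m, n)) (B : 'M[C]_(n, p)) :
  ctrmx (A *m B) = ctrmx B *m ctrmx A.
Proof. by rewrite /ctrmx map_mxM trmx_mul. Qed.

Lemma ctrmxK m n (A : 'M[C]_(m, n)) : ctrmx (ctrmx A) = A.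
Proof. by apply/matrixP => i j; rewrite !ctrE conjCK. Qed.

Lemma ctrmxZ m n a (A : 'M[C]_(m, n)) : ctrmx (a *: A) = a^* *: ctrmx A.
Proof. by apply/matrixP => i j; rewrite /ctrmx !mxE rmorphM. Qed.

Lemma rank_fact p n q (X Xt : 'M[C]_(p, n)) (Y Yt : 'M[C]_(n, q)) :
  X *m Y = Xt *m Yt -> left_invertible X -> left_invertible Xt ->
  right_invertible Y -> right_invertible Yt ->
  exists G H : 'M[C]_n, G *m H = 1%:M /\ H *m G = 1%:M /\
    Xt = X *m G /\ Yt = H *m Y.
Proof.
move=> e [L hL0] [Lt hLt0] [Rr hR0] [Rt hRt0].
have hL : L *m X = 1%:M by exact: hL0. have hLt : Lt *m Xt = 1%:M by exact: hLt0.
have hR : Y *m Rr = 1%:M by exact: hR0. have hRt : Yt *m Rt = 1%:M by exact: hRt0.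
have eXt : Xt = X *m (Y *m Rt) by rewrite mulmxA e -mulmxA hRt mulmx1.
have eYt : Yt = (Lt *m X) *m Y by rewrite -mulmxA e mulmxA hLt mul1mx.
have GH : (L *m Xt) *m (Yt *m Rr) = 1%:M.
  by rewrite !mulmxA -(mulmxA L Xt Yt) -e mulmxA hL mul1mx hR.
exists (L *m Xt); exists (Yt *m Rr); split => //; split; first exact: mulmx1C.
split.
  by rewrite {2}eXt (mulmxA L X) hL mul1mx -eXt.
by rewrite {2}eYt -(mulmxA (Lt *m X) Y Rr) hR mulmx1 -eYt.
Qed.

Lemma u_step m n p q (A : 'M[C]_(m, p * q)) (B : 'M[C]_(n, q * p))
  (H2 : 'M[C]_m) (H1 : 'M[C]_n) (u ut : 'M[C]_(m * n, p * p)) :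
  (forall a b j j', u (mxvec_index a b) (mxvec_index j j')
     = \sum_(g < q) A a (mxvec_index j g) * B b (mxvec_index g j')) ->
  (forall a b j j', ut (mxvec_index a b) (mxvec_index j j')
     = \sum_(g < q) (H2 *m A) a (mxvec_index j g) * (H1 *m B) b (mxvec_index g j')) ->
  ut = kron H2 H1 *m u.
Proof.
move=> hu hut; apply/matrixP => r c.
case: (mxvec_indexP r) => a b; case: (mxvec_indexP c) => j j'.
rewrite hut mxE big_mxvec.
under [LHS]eq_bigr do rewrite !mxE big_distrl /=.
rewrite exchange_big /=; apply: eq_bigr => a' _.
under [LHS]eq_bigr do rewrite big_distrr /=.
rewrite exchange_big /=; apply: eq_bigr => b' _.
rewrite kronE hu big_distrr /=; apply: eq_bigr => g _.
by rewrite mulrACA.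
Qed.

Lemma kron_ctr m n (A : 'M[C]_m) (B : 'M[C]_n) :
  kron A B *m ctrmx (kron A B) = 1%:M ->
  forall a c b e, (A *m ctrmx A) a c * (B *m ctrmx B) b e = ((a == c) && (b == e))%:R.
Proof.
move=> h a c b e.
have := congr1 (fun M : 'M[C]_(m * n) => M (mxvec_index a b) (mxvec_index c e)) h.
rewrite /= [X in X = _ -> _]mxE [X in _ = X -> _]mxE mxvec_eq big_mxvec => <-.
rewrite !mxE big_distrl; apply: eq_bigr => a' _.
rewrite big_distrr; apply: eq_bigr => b' _ /=.
rewrite !ctrE !kronE rmorphM /=; rewrite mulrACA //.
Qed.

Lemma scalar_of m n (P : 'M[C]_m) (Q : 'M[C]_n) (hm : (0 < m)%N) (hn : (0 < n)%N) :
  (forall a c b e, P a c * Q b e = ((a == c) && (b == e))%:R) ->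
  P = (P (Ordinal hm) (Ordinal hm))%:M /\ Q = (Q (Ordinal hn) (Ordinal hn))%:M /\
  P (Ordinal hm) (Ordinal hm) * Q (Ordinal hn) (Ordinal hn) = 1.
Proof.
set i0 := Ordinal hm; set j0 := Ordinal hn; move=> H.
have pq : P i0 i0 * Q j0 j0 = 1 by rewrite H !eqxx.
split; [|split => //].
  apply/matrixP => a c; rewrite mxE.
  have := H a c j0 j0; rewrite eqxx andbT => h.
  rewrite -[P a c]mulr1 -pq mulrA mulrAC h.
  by rewrite mulr_natl.
apply/matrixP => b e; rewrite mxE.
have := H i0 i0 b e; rewrite eqxx /= => h.
rewrite -[Q b e]mulr1 -pq mulrA [Q b e * _]mulrC h.
by rewrite mulr_natl.
Qed.

Lemma diag_ge0 m (A : 'M[C]_m) i : 0 <= (A *m ctrmx A) i i.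
Proof.
by rewrite mxE; apply: sumr_ge0 => k _; rewrite ctrE mul_conjC_ge0.
Qed.

Lemma scale_unitary n (H G : 'M[C]_n) (s : C) :
  s != 0 -> s^* = s -> G *m H = 1%:M -> H *m ctrmx H = (s * s)%:M ->
  exists W : 'M[C]_n, unitary_mx W /\ G = s^-1 *: W /\ H = s *: ctrmx W.
Proof.
move=> s0 sc GH HH.
have sic : (s^-1)^* = s^-1.
  by rewrite fmorphV /= sc.
set W' := s^-1 *: H.
have WW : W' *m ctrmx W' = 1%:M.
  rewrite /W' ctrmxZ sic -scalemxAr -scalemxAl HH !scale_scalar_mx.
  by congr (_%:M); field.
exists (ctrmx W'); split; first by rewrite /unitary_mx ctrmxK; split => //; exact: mulmx1C.
split; last by rewrite ctrmxK /W' scalerA mulfV // scale1r.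
have HW : H *m ctrmx W' = s%:M.
  rewrite /W' ctrmxZ sic -scalemxAr HH !scale_scalar_mx.
  by congr (_%:M); field.
have -> : G = G *m (s^-1 *: (H *m ctrmx W')).
  by rewrite HW scale_scalar_mx mulVf // mulmx1.
by rewrite -scalemxAr mulmxA GH mul1mx.
Qed.

End Aux.
Theorem mainTheorem2 (R : realType) (d D dl dr : nat)
  (_ : (0 < d)%N) (_ : (0 < D)%N) (_ : (0 < dl)%N) (_ : (0 < dr)%N)
  (U : 'I_d -> 'I_d -> 'I_D -> 'I_D -> R[i])
  (X1 Xt1 : 'M[R[i]]_(d * D, dr)) (Y1 Yt1 : 'M[R[i]]_(dr, D * d))
  (X2 Xt2 : 'M[R[i]]_(d * D, dl)) (Y2 Yt2 : 'M[R[i]]_(dl, d * D)) :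
  admissible U X1 Y1 X2 Y2 ->
  admissible U Xt1 Yt1 Xt2 Yt2 ->
  left_invertible X1 -> left_invertible X2 ->
  left_invertible Xt1 -> left_invertible Xt2 ->
  right_invertible Y1 -> right_invertible Y2 ->
  right_invertible Yt1 -> right_invertible Yt2 ->
  exists (delta1 delta2 : R[i]) (W1 : 'M[R[i]]_dr) (W2 : 'M[R[i]]_dl),
    delta1 != 0 /\ delta2 != 0 /\ delta1 * delta2 = 1 /\
    unitary_mx W1 /\ unitary_mx W2 /\
    Xt1 = delta1 *: (X1 *m W1) /\ Yt1 = delta1^-1 *: (ctrmx W1 *m Y1) /\
    Xt2 = delta2 *: (X2 *m W2) /\ Yt2 = delta2^-1 *: (ctrmx W2 *m Y2).
Proof.
have hdl : (0 < dl)%N by assumption.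
have hdr : (0 < dr)%N by assumption.
move=> [ha [[u [hu uu]] _]] [hta [[ut [hut utu]] _]] lX1 lX2 lXt1 lXt2 rY1 rY2 rYt1 rYt2.
have e1 : X1 *m Y1 = Xt1 *m Yt1.
  apply/matrixP => r c; case: (mxvec_indexP r) => i be; case: (mxvec_indexP c) => al j.
  by rewrite !mxE -(ha i j al be).1 -(hta i j al be).1.
have e2 : X2 *m Y2 = Xt2 *m Yt2.
  apply/matrixP => r c; case: (mxvec_indexP r) => i al; case: (mxvec_indexP c) => j be.
  by rewrite !mxE -(ha i j al be).2 -(hta i j al be).2.
have [G1 [K1 [GH1 [HG1 [eX1 eY1]]]]] := rank_fact e1 lX1 lXt1 rY1 rYt1.
have [G2 [K2 [GH2 [HG2 [eX2 eY2]]]]] := rank_fact e2 lX2 lXt2 rY2 rYt2.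
have Ku : ut = kron K2 K1 *m u.
  apply: (u_step (A:=Y2) (B:=Y1) hu) => a b j j'.
  by rewrite hut eY1 eY2.
have KK : kron K2 K1 *m ctrmx (kron K2 K1) = 1%:M.
  have := utu.1; rewrite Ku ctrmx_mul mulmxA -(mulmxA (kron K2 K1) u) uu.1.
  by rewrite mulmx1.
have PQ := kron_ctr KK.
have [eP [eQ pq]] := scalar_of hdl hdr PQ.
move: eP eQ pq.
set p := (K2 *m ctrmx K2) (Ordinal hdl) (Ordinal hdl).
set q := (K1 *m ctrmx K1) (Ordinal hdr) (Ordinal hdr).
move=> eP eQ pq.
have p_ge0 : 0 <= p by apply: diag_ge0.
have p0 : p != 0 by apply/eqP => p0; move: pq; rewrite p0 mul0r => /eqP; rewrite eq_sym oner_eq0.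
have qE : q = p^-1 by apply: (mulfI p0); rewrite pq mulfV.
set s := sqrtC p.
have ss : s * s = p by rewrite -expr2 sqrtCK.
have sc : s^* = s by apply: geC0_conj; rewrite sqrtC_ge0.
have s0 : s != 0 by rewrite sqrtC_eq0.
have [W2 [uW2 [eG2 eH2]]] := scale_unitary s0 sc GH2 (etrans eP (congr1 _ (esym ss))).
have s10 : s^-1 != 0 by rewrite invr_eq0.
have s1c : (s^-1)^* = s^-1 by rewrite fmorphV /= sc.
have ss1 : q = s^-1 * s^-1 by rewrite qE -ss invfM.
have [W1 [uW1 [eG1 eH1]]] := scale_unitary s10 s1c GH1 (etrans eQ (congr1 _ ss1)).
exists (s^-1)^-1, s^-1, W1, W2.
split; first by rewrite invr_eq0.
split => //.
split; first by rewrite invrK mulfV.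
split => //; split => //.
split; first by rewrite eX1 eG1 scalemxAr.
split; first by rewrite eY1 eH1 invrK scalemxAl.
split; first by rewrite eX2 eG2 scalemxAr.
by rewrite eY2 eH2 invrK scalemxAl.
Qed.
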